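(* Let $n\ge m$ and $\ell,N,p,q,K\in\mathbb{N}$. Let $\mathcal{S}=\{x\in\mathbb{R}^n : Fx\le\mathbf{1}_p\}$ be a C-polytope with $F\in\mathbb{R}^{p\times n}$ of full column rank and vertices $x_1,\dots,x_N$, and let $\mathscr{U}=\{u\in\mathbb{R}^m: Hu\le\mathbf{1}_q\}$ be a C-polytope with $H\in\mathbb{R}^{q\times m}$ of full column rank. Let $\delta^{(1)},\dots,\delta^{(K)}\in\mathbb{R}^\ell$ be given, with associated matrices $A(\delta^{(j)})\in\mathbb{R}^{n\times n}$, $B(\delta^{(j)})\in\mathbb{R}^{n\times m}$. For each $j$ set $G^{(j)}=\begin{bmatrix}H\\ FB(\delta^{(j)})\end{bmatrix}$ and $l^{(i,j)}=\begin{bmatrix}\mathbf{1}_q\\ \mathbf{1}_p-FA(\delta^{(j)})x_i\end{bmatrix}$. Let $$\mathcal{L}_{\delta_K}=\{(C_1,\dots,C_N,d_1,\dots,d_N): C_i\in\mathbb{R}^{m\times\ell},\ d_i\in\mathbb{R}^m,\ C_i\delta^{(j)}+d_i\in\mathscr{U},\ A(\delta^{(j)})x_i+B(\delta^{(j)})(C_i\delta^{(j)}+d_i)\in\mathcal{S}\ \forall i,\ \forall j\}.$$ If $\mathcal{L}_{\delta_K}\neq\emptyset$, then for every $i\in\{1,\dots,N\}$ and $j\in\{1,\dots,K\}$ there exist index sets $\mathcal{Q}\subset\{1,\dots,q\}$, $\mathcal{P}\subset\{1,\dots,p\}$ such that the submatrix $G^{(j)}_{\mathcal{Q}\cup\mathcal{P}}\in\mathbb{R}^{m\times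 m}$ (rows $\mathcal{Q}$ of $H$ and rows $\mathcal{P}$ of $FB(\delta^{(j)})$) is invertible and $$(H)_k\,(G^{(j)}_{\mathcal{Q}\cup\mathcal{P}})^{-1}\,l^{(i,j)}_{\mathcal{Q}\cup\mathcal{P}}\le 1\quad\forall k\in\{1,\dots,q\}\setminus\mathcal{Q},$$ $$(FB(\delta^{(j)}))_k\,(G^{(j)}_{\mathcal{Q}\cup\mathcal{P}})^{-1}\,l^{(i,j)}_{\mathcal{Q}\cup\mathcal{P}}\le 1-(FA(\delta^{(j)})x_i)_k\quad\forall k\in\{1,\dots,p\}\setminus\mathcal{P}.$$
   Context: A C-polytope is a convex bounded polyhedron containing the origin in its interior. $(P)_k$ denotes the $k$-th row of a matrix $P$; for an index set $\mathcal{I}$, $P_{\mathcal{I}}$ (resp. $y_{\mathcal{I}}$) denotes the submatrix (subvector) of rows (entries) indexed by $\mathcal{I}$. $\mathbf{1}_p$ is the all-ones vector in $\mathbb{R}^p$. *)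

(* Defs.v *)
From mathcomp Require Import all_boot all_order all_algebra.
Set Implicit Arguments. Unset Strict Implicit. Unset Printing Implicit Defensive.
Import Order.TTheory GRing.Theory Num.Theory.
Local Open Scope ring_scope.

Definition polyset (R : realFieldType) (p n : nat) (F : 'M[R]_(p, n))
  (x : 'cV[R]_n) : Prop := forall k : 'I_p, (F *m x) k 0 <= 1.

Definition bounded_set (R : realFieldType) (n : nat) (S : 'cV[R]_n -> Prop) : Prop :=
  exists M : R, forall x, S x -> forall k : 'I_n, `|x k 0| <= M.

Definition origin_interior (R : realFieldType) (n : nat) (S : 'cV[R]_n -> Prop) : Prop :=
  exists eps : R, 0 < eps /\ forall x : 'cV[R]_n, (forall k, `|x k 0| <= eps) -> S x.

Definition convex_set (R : realFieldType) (n : nat) (S : 'cV[R]_n -> Prop) : Prop :=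
  forall x y (t : R), S x -> S y -> 0 <= t <= 1 -> S (t *: x + (1 - t) *: y).

Definition C_polytope (R : realFieldType) (n : nat) (S : 'cV[R]_n -> Prop) : Prop :=
  [/\ convex_set S, bounded_set S & origin_interior S].

Definition is_vertex (R : realFieldType) (n : nat) (S : 'cV[R]_n -> Prop)
  (x : 'cV[R]_n) : Prop :=
  S x /\ forall y z (t : R), S y -> S z -> 0 < t < 1 ->
    x = t *: y + (1 - t) *: z -> y = z.

Definition L_deltaK_nonempty (R : realFieldType) (n m l p q N K : nat)
  (F : 'M[R]_(p, n)) (H : 'M[R]_(q, m))
  (A : 'cV[R]_l -> 'M[R]_n) (B : 'cV[R]_l -> 'M[R]_(n, m))
  (x : 'I_N -> 'cV[R]_n) (delta : 'I_K -> 'cV[R]_l) : Prop :=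
  exists (C : 'I_N -> 'M[R]_(m, l)) (d : 'I_N -> 'cV[R]_m),
    forall (i : 'I_N) (j : 'I_K),
      polyset H (C i *m delta j + d i) /\
      polyset F (A (delta j) *m x i + B (delta j) *m (C i *m delta j + d i)).

(* Rows of a matrix selected by an index set (in increasing enumeration order). *)
Definition rows_of (R : Type) (r c : nat) (I : {set 'I_r}) (M : 'M[R]_(r, c))
  : 'M[R]_(#|I|, c) :=
  \matrix_(k < #|I|, j < c) M (enum_val k) j.

Definition G_sub (R : realFieldType) (m p q : nat)
  (H : 'M[R]_(q, m)) (FB : 'M[R]_(p, m)) (Q : {set 'I_q}) (P : {set 'I_p})
  : 'M[R]_(#|Q| + #|P|, m) :=
  col_mx (rows_of Q H) (rows_of P FB).

Definition l_sub (R : realFieldType) (p q : nat)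
  (FAx : 'cV[R]_p) (Q : {set 'I_q}) (P : {set 'I_p}) : 'cV[R]_(#|Q| + #|P|) :=
  col_mx (rows_of Q (const_mx 1 : 'cV[R]_q)) (rows_of P (const_mx 1 - FAx)).

(* Main.v *)
Require Import Defs.
From mathcomp Require Import all_boot all_order all_algebra.
Set Implicit Arguments. Unset Strict Implicit. Unset Printing Implicit Defensive.
Import Order.TTheory GRing.Theory Num.Theory.
Local Open Scope ring_scope.

Section Aux.
Variable R : realFieldType.

Definition Msel r m (M : 'M[R]_(r, m)) (S : {set 'I_r}) : 'M[R]_(r, m) :=
  \matrix_(i, j) (if i \in S then M i j else 0).

Lemma row_Msel r m (M : 'M[R]_(r, m)) S i :
  row i (Msel M S) = if i \in S then row i M else 0.
Proof. by apply/rowP => j; rewrite !mxE; case: (i \in S); rewrite ?mxE. Qed.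

Lemma Msel_mul r m (M : 'M[R]_(r, m)) S (v : 'cV[R]_m) s :
  (Msel M S *m v) s 0 = if s \in S then (M *m v) s 0 else 0.
Proof.
rewrite !mxE; case: ifP => sS.
  by apply: eq_bigr => j _; rewrite mxE sS.
by rewrite big1 // => j _; rewrite mxE sS mul0r.
Qed.

Lemma rank_Msel r m (M : 'M[R]_(r, m)) S : (\rank (Msel M S) <= #|S|)%N.
Proof.
apply: leq_trans (rank_leq_row (rows_of S M)).
apply: mxrankS; apply/row_subP => i; rewrite row_Msel.
case: ifP => iS; last exact: sub0mx.
have -> : row i M = row (enum_rank_in iS i) (rows_of S M).
  by apply/rowP => j; rewrite !mxE enum_rankK_in.
exact: row_sub.
Qed.

Lemma Msel_sub r m (M : 'M[R]_(r, m)) (S S' : {set 'I_r}) : S \subset S' -> (Msel M S <= Msel M S')%MS.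
Proof.
move=> sub; apply/row_subP => i; rewrite row_Msel.
case: ifP => iS; last exact: sub0mx.
have -> : row i M = row i (Msel M S') by rewrite row_Msel (subsetP sub).
exact: row_sub.
Qed.

Lemma full_ker m n (A : 'M[R]_(m, n)) (v : 'cV[R]_n) : \rank A = n -> A *m v = 0 -> v = 0.
Proof.
move=> rA Av; have /row_fullP [B BA] : row_full A by rewrite /row_full rA.
by rewrite -[v]mul1mx -BA -mulmxA Av mulmx0.
Qed.

Lemma ker_unit n (A : 'M[R]_n) : (forall w : 'cV[R]_n, A *m w = 0 -> w = 0) -> A \in unitmx.
Proof.
move=> Hk; rewrite -unitmx_tr -row_free_unit -kermx_eq0.
apply/eqP/row_matrixP => i; rewrite row0.
have : (row i (kermx A^T) <= kermx A^T)%MS by exact: row_sub.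
move/sub_kermxP => h.
have : A *m (row i (kermx A^T))^T = 0.
  by have := congr1 trmx h; rewrite trmx_mul trmxK trmx0.
by move/Hk => /(congr1 trmx); rewrite trmxK trmx0.
Qed.

Definition feas r m (M : 'M[R]_(r, m)) (b : 'cV[R]_r) (u : 'cV[R]_m) := forall k, (M *m u) k 0 <= b k 0.
Definition good r m (M : 'M[R]_(r, m)) (b : 'cV[R]_r) (S : {set 'I_r}) :=
  exists u : 'cV[R]_m, feas M b u /\ (forall s, s \in S -> (M *m u) s 0 = b s 0)
            /\ \rank (Msel M S) = #|S|.

Lemma step r m (M : 'M[R]_(r, m)) (b : 'cV[R]_r) (S : {set 'I_r}) :
  (forall v : 'cV[R]_m, M *m v = 0 -> v = 0) -> good M b S -> (#|S| < m)%N ->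
  exists S', good M b S' /\ #|S'| = #|S|.+1.
Proof.
move=> Hker [u [fu [au rk]]] Sm.
set C := cokermx (Msel M S).
have rC : \rank C = (m - #|S|)%N by rewrite mxrank_coker rk.
have [j Cj] : exists j, col j C != 0.
  case: (boolP [exists j, col j C != 0]) => [/existsP[j Cj] | /existsPn h].
    by exists j.
  have C0 : C = 0.
    apply/matrixP => a c; have := h c; rewrite negbK => /eqP/matrixP/(_ a 0).
    by rewrite !mxE.
  by move: rC; rewrite C0 mxrank0 => /esym/eqP; rewrite subn_eq0 leqNgt Sm.
set w := col j C.
have Sw : Msel M S *m w = 0.
  have := mulmx_coker (Msel M S); rewrite -/C => /matrixP h.
  apply/matrixP => a c; rewrite (ord1 c); transitivity ((Msel M S *m C) a j); last by rewrite h !mxE.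
  by rewrite !mxE; apply: eq_bigr => k _; rewrite !mxE.
have [r0 r0w] : exists r0, (M *m w) r0 0 != 0.
  case: (boolP [exists r0, (M *m w) r0 0 != 0]) => [/existsP[r0 h] | /existsPn h].
    by exists r0.
  have : M *m w = 0.
    by apply/matrixP => a c; rewrite (ord1 c) [RHS]mxE; apply/eqP; have := h a; rewrite negbK.
  by move/Hker => w0; move: Cj; rewrite -/w w0 eqxx.
have [v [Sv [r1 pv]]] : exists v : 'cV[R]_m, Msel M S *m v = 0 /\ exists r1, 0 < (M *m v) r1 0.
  case: (ltP 0 ((M *m w) r0 0)) => h.
    by exists w; split => //; exists r0.
  exists (- w); split; first by rewrite mulmxN Sw oppr0.
  exists r0; rewrite mulmxN mxE oppr_gt0 lt_neqAle h andbT; exact: r0w.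
pose P := fun k => 0 < (M *m v) k 0.
pose ratio := fun k => (b k 0 - (M *m u) k 0) / (M *m v) k 0.
case: (@arg_minP _ _ _ r1 P ratio pv) => rs Prs minrs.
set t := ratio rs.
have t0 : 0 <= t by rewrite /t /ratio divr_ge0 ?subr_ge0 // ltW.
pose u' := u + t *: v.
have Mu' : forall k, (M *m u') k 0 = (M *m u) k 0 + t * (M *m v) k 0.
  by move=> k; rewrite mulmxDr -scalemxAr !mxE.
have Mvs : forall s, s \in S -> (M *m v) s 0 = 0.
  by move=> s sS; have := Msel_mul M S v s; rewrite sS Sv mxE.
have rsS : rs \notin S by apply/negP => /Mvs; rewrite /P in Prs => h; rewrite h ltxx in Prs.
exists (rs |: S); split; last by rewrite cardsU1 rsS.
exists u'; split; [|split].
- move=> k; rewrite Mu'.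
  case: (boolP (P k)) => Pk.
    have h := minrs k Pk; rewrite -/t /ratio ler_pdivlMr // in h.
    by rewrite -lerBrDl.
  have : t * (M *m v) k 0 <= 0 by rewrite mulr_ge0_le0 // leNgt.
  have := fu k; move=> h1 h2; apply: le_trans h1; rewrite gerDl; done.
- move=> s; rewrite in_setU1 => /orP[/eqP -> | sS].
    by rewrite Mu' /t /ratio (divfK (lt0r_neq0 Prs)) addrC subrK.
  by rewrite Mu' Mvs // mulr0 addr0 au.
- apply/eqP; rewrite eqn_leq rank_Msel /= cardsU1 rsS add1n -rk.
  apply: rank_ltmx; rewrite ltmxE Msel_sub ?subsetUr //=.
  apply/negP => hsub.
  have : (row rs M <= Msel M S)%MS.
    apply: submx_trans hsub; have <- : row rs (Msel M (rs |: S)) = row rs M.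
      by rewrite row_Msel setU11.
    exact: row_sub.
  case/submxP => D hD.
  have : (row rs M *m v) 0 0 = 0 by rewrite hD -mulmxA Sv mulmx0 mxE.
  by rewrite -row_mul mxE => h; rewrite /P h ltxx in Prs.
Qed.

Lemma exists_basis r m (M : 'M[R]_(r, m)) (b : 'cV[R]_r) (u0 : 'cV[R]_m) :
  (forall v : 'cV[R]_m, M *m v = 0 -> v = 0) -> feas M b u0 ->
  exists S, good M b S /\ #|S| = m.
Proof.
move=> Hker fu0.
suff : forall k, (k <= m)%N -> exists S, good M b S /\ #|S| = k by apply.
elim=> [_|k IH km].
  exists set0; split; last by rewrite cards0.
  exists u0; split => //; split; first by move=> s; rewrite in_set0.
  have -> : Msel M set0 = 0 by apply/matrixP => a c; rewrite !mxE in_set0.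
  by rewrite mxrank0 cards0.
have [S [gS cS]] := IH (ltnW km).
have := step Hker gS; rewrite cS => /(_ km) [S' [gS' cS']].
by exists S'; split => //; rewrite cS' cS.
Qed.

Lemma rows_of_mul r c k (S : {set 'I_r}) (A : 'M[R]_(r, c)) (w : 'M[R]_(c, k)) :
  rows_of S A *m w = rows_of S (A *m w).
Proof. by apply/matrixP => a d; rewrite !mxE; apply: eq_bigr => x _; rewrite !mxE. Qed.

Lemma castmx_mul_entry a m (e : a = m) (A : 'M[R]_(a, m)) (w : 'cV[R]_m) i :
  (castmx (e, erefl m) A *m w) i 0 = (A *m w) (cast_ord (esym e) i) 0.
Proof. by rewrite !mxE; apply: eq_bigr => x _; rewrite castmxE cast_ord_id. Qed.

End Aux.

Theorem proposition1 (R : realFieldType) (n m l N p q K : nat)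
  (F : 'M[R]_(p, n)) (H : 'M[R]_(q, m)) (x : 'I_N -> 'cV[R]_n)
  (A : 'cV[R]_l -> 'M[R]_n) (B : 'cV[R]_l -> 'M[R]_(n, m))
  (delta : 'I_K -> 'cV[R]_l) :
  (m <= n)%N ->
  C_polytope (polyset F) -> \rank F = n ->
  injective x -> (forall y, is_vertex (polyset F) y <-> exists i, y = x i) ->
  C_polytope (polyset H) -> \rank H = m ->
  L_deltaK_nonempty F H A B x delta ->
  forall (i : 'I_N) (j : 'I_K),
    exists (Q : {set 'I_q}) (P : {set 'I_p}) (e : (#|Q| + #|P|)%N = m),
      let FB := F *m B (delta j) in
      let FAx := F *m A (delta j) *m x i in
      let G := castmx (e, erefl m) (G_sub H FB Q P) in
      let u := invmx G *m castmx (e, erefl 1%N) (l_sub FAx Q P) in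
      [/\ G \in unitmx,
          forall k : 'I_q, k \notin Q -> (row k H *m u) 0 0 <= 1
        & forall k : 'I_p, k \notin P -> (row k FB *m u) 0 0 <= 1 - FAx k 0].
Proof.
move=> _ _ _ _ _ _ rH [C [d hL]] i j.
pose M := col_mx H (F *m B (delta j)).
pose b := col_mx (const_mx 1 : 'cV[R]_q) (const_mx 1 - F *m A (delta j) *m x i).
have Hker : forall v : 'cV[R]_m, M *m v = 0 -> v = 0.
  move=> v; rewrite /M mul_col_mx -col_mx0 => /eq_col_mx [Hv _].
  exact: full_ker rH Hv.
have [hU hS] := hL i j.
set u0 := C i *m delta j + d i in hU hS.
have fu0 : feas M b u0.
  move=> k; rewrite /M /b mul_col_mx -(splitK k); case: (split k) => k' /=.
    by rewrite !col_mxEu [const_mx _ _ _]mxE; exact: hU.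
  rewrite !col_mxEd [X in _ <= X]mxE [const_mx _ _ _]mxE; have := hS k'.
  by rewrite mulmxDr !mulmxA [X in X <= _]mxE [X in _ -> _ <= 1 + X]mxE -lerBrDl addrC.
have [S [[u [fu [au rk]]] cS]] := exists_basis Hker fu0.
pose Q := [set k | lshift p k \in S].
pose P := [set k | rshift q k \in S].
have cQP : (#|Q| + #|P|)%N = #|S|.
  rewrite -!sum1_card big_split_ord /=.
  by congr (_ + _); apply: eq_bigl => k; rewrite inE.
have e : (#|Q| + #|P|)%N = m by rewrite cQP.
exists Q, P, e; cbv zeta.
set G := castmx _ _.
set l' := castmx _ (l_sub _ _ _).
have Gw : forall w : 'cV[R]_m, forall i0,
    (G *m w) i0 0 = col_mx (rows_of Q (H *m w)) (rows_of P (F *m B (delta j) *m w))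
                      (cast_ord (esym e) i0) 0.
  by move=> w i0; rewrite castmx_mul_entry /G_sub mul_col_mx !rows_of_mul.
have GU : G \in unitmx.
  apply: ker_unit => w Gw0.
  have rk' : \rank (Msel M S) = m by rewrite rk cS.
  apply: (full_ker rk'); apply/matrixP => s c; rewrite (ord1 c) Msel_mul [RHS]mxE.
  case: ifP => // sS.
  rewrite /M mul_col_mx -(splitK s); move: sS; rewrite -{1}(splitK s).
  case: (split s) => k /= kS.
    have kQ : k \in Q by rewrite inE.
    have := Gw w (cast_ord e (lshift #|P| (enum_rank_in kQ k))).
    by rewrite Gw0 cast_ordK !col_mxEu [X in _ = X -> _]mxE enum_rankK_in // mxE => <-.
  have kP : k \in P by rewrite inE.
  have := Gw w (cast_ord e (rshift #|Q| (enum_rank_in kP k))).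
  by rewrite Gw0 cast_ordK !col_mxEd [X in _ = X -> _]mxE enum_rankK_in // mxE => <-.
have Gu : G *m u = l'.
  apply/matrixP => i0 c; rewrite (ord1 c) Gw /l' castmxE /= cast_ord_id.
  rewrite /l_sub; set i1 := cast_ord _ i0; rewrite -(splitK i1).
  case: (split i1) => k /=.
    rewrite !col_mxEu !mxE.
    have : lshift p (enum_val k) \in S by have := enum_valP k; rewrite inE.
    by move/au; rewrite /M /b mul_col_mx !col_mxEu !mxE.
  rewrite !col_mxEd !mxE.
  have : rshift q (enum_val k) \in S by have := enum_valP k; rewrite inE.
  by move/au; rewrite /M /b mul_col_mx !col_mxEd !mxE.
have -> : invmx G *m l' = u by rewrite -Gu mulKmx.
split => // k _.
  have := fu (lshift p k); rewrite /M /b mul_col_mx !col_mxEu.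
  by rewrite -row_mul [X in _ -> X <= _]mxE [const_mx _ _ _]mxE.
have := fu (rshift q k); rewrite /M /b mul_col_mx !col_mxEd.
rewrite -row_mul [X in _ -> X <= _]mxE [X in _ <= X -> _]mxE [const_mx _ _ _]mxE.
by rewrite [X in _ <= _ + X -> _]mxE.
Qed.
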